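(* Let $G$ be a finite simple graph, $s\geq1$, and $e_1,\dots,e_s$ edges of $G$ (repetitions allowed). If $u$ and $v$ are vertices of $G$ (possibly $u=v$) that are even-connected with respect to $e_1\cdots e_s$, then $uv\in(I(G)^{s+1}:e_1\cdots e_s)$.
   Context: $S=K[\,x : x\in V(G)\,]$, $I(G)=(xy : xy\text{ an edge of } G)$, edges identified with degree-2 monomials, $(J:m)=\{f\in S: fm\in J\}$. Even-connection: vertices $u,v$ (possibly equal) are even-connected with respect to the sequence $e_1,\dots,e_s$ if there is a sequence of vertices $p_0,p_1,\dots,p_{2k+1}$ with $k\geq1$ (vertices may repeat) such that (1) $p_0=u$, $p_{2k+1}=v$; (2) for all $0\leq l\leq k-1$, $p_{2l+1}p_{2l+2}=e_i$ for some $i$; (3) for every $i$, $|\{l\geq0 : p_{2l+1}p_{2l+2}=e_i\}|\leq|\{j : e_j=e_i\}|$; (4) for all $0\leq r\leq 2k$, $p_rp_{r+1}$ is an edge of $G$. *)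

(* Defs.v *)
From mathcomp Require Import all_boot all_order all_algebra.
From mathcomp Require Import mpoly.
Set Implicit Arguments. Unset Strict Implicit. Unset Printing Implicit Defensive.
Import GRing.Theory.
Local Open Scope ring_scope.

Section Ideals.
Variable R : comNzRingType.

Definition ideal_gen (P : R -> Prop) (f : R) : Prop :=
  exists l : seq (R * R), (forall q, q \in l -> P q.2) /\
                          f = \sum_(q <- l) q.1 * q.2.

Definition ideal_mul (I J : R -> Prop) : R -> Prop :=
  ideal_gen (fun f => exists a b, I a /\ J b /\ f = a * b).

Fixpoint ideal_pow (I : R -> Prop) (k : nat) : R -> Prop :=
  match k with
  | 0 => ideal_gen (fun f => f = 1)
  | k'.+1 => ideal_mul (ideal_pow I k') I
  end.

Definition ideal_colon (J : R -> Prop) (m : R) : R -> Prop :=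
  fun f => J (f * m).
End Ideals.

Definition simple_graph (n : nat) (adj : rel 'I_n) : Prop :=
  ssrbool.symmetric adj /\ ssrbool.irreflexive adj.

Definition is_edge (n : nat) (adj : rel 'I_n) (E : {set 'I_n}) : Prop :=
  exists a b, adj a b /\ E = [set a; b].

Definition edge_ideal (K : fieldType) (n : nat) (adj : rel 'I_n)
  : {mpoly K[n]} -> Prop :=
  ideal_gen (fun f => exists a b, adj a b /\ f = 'X_a * 'X_b).

Definition edge_mon (K : fieldType) (n : nat) (E : {set 'I_n}) : {mpoly K[n]} :=
  \prod_(v in E) 'X_v.

(* Even-connection of u and v with respect to the sequence e_1..e_s
   (edges e : 'I_s -> {set 'I_n}); the vertex sequence p_0..p_{2k+1}
   is given by p : nat -> 'I_n (values beyond 2k+1 are irrelevant). *)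
Definition even_connected (n s : nat) (adj : rel 'I_n)
  (e : 'I_s -> {set 'I_n}) (u v : 'I_n) : Prop :=
  exists (k : nat) (p : nat -> 'I_n),
    [/\ (1 <= k)%N,
        p 0%N = u /\ p (2 * k + 1)%N = v,
        (forall l, (l < k)%N -> exists i : 'I_s,
              [set p (2 * l + 1)%N; p (2 * l + 2)%N] = e i),
        (forall i : 'I_s,
            (count (fun l => [set p (2 * l + 1)%N; p (2 * l + 2)%N] == e i)
                   (iota 0 k)
             <= count (fun j => e j == e i) (enum 'I_s))%N) &
        (forall r, (r <= 2 * k)%N -> adj (p r) (p r.+1))].

(* Main.v *)
Require Import Defs.
From mathcomp Require Import all_boot all_order all_algebra.
From mathcomp Require Import mpoly.
Local Open Scope ring_scope.
Import GRing.Theory.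

Lemma submset (T : eqType) (W S : seq T) :
  (forall x, (count_mem x W <= count_mem x S)%N) ->
  exists R, perm_eq S (W ++ R).
Proof.
elim: W S => [|x W IH] S H; first by exists S.
have xS : x \in S.
  by rewrite -has_pred1 has_count; apply: leq_trans (H x); rewrite /= eqxx.
have [R HR] : exists R, perm_eq (rem x S) (W ++ R).
  apply: IH => y; rewrite count_mem_rem; have h := H y; rewrite /= in h.
  rewrite leq_subRL //.
  by apply: leq_trans h; rewrite leq_addr.
exists R; apply: perm_trans (perm_to_rem xS) _; by rewrite /= perm_cons.
Qed.

From mathcomp Require Import ring zify.

Section Main.
Variables (K : fieldType) (n : nat) (adj : rel 'I_n).
Local Notation I := (@edge_ideal K n adj).

Lemma pow_prod (l : seq {mpoly K[n]}) :
  (forall f, f \in l -> I f) -> ideal_pow I (size l) (\prod_(f <- l) f).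
Proof.
elim: l => [|f l IH] H /=.
  by exists [:: (1, 1)]; split; [move=> q; rewrite inE => /eqP -> | rewrite big_nil big_seq1 mulr1].
exists [:: (1, (\prod_(g <- l) g) * f)]; split.
  move=> q; rewrite inE => /eqP -> /=; exists (\prod_(g <- l) g), f; split => //.
    by apply: IH => g gl; apply: H; rewrite inE gl orbT.
  by split => //; apply: H; rewrite inE eqxx.
by rewrite big_seq1 mul1r big_cons mulrC.
Qed.

Lemma edge_in a b : adj a b -> I ('X_a * 'X_b).
Proof.
move=> ab; exists [:: (1, 'X_a * 'X_b)]; split.
  by move=> q; rewrite inE => /eqP -> /=; exists a, b.
by rewrite big_seq1 mul1r.
Qed.

Lemma edge_mon2 (a b : 'I_n) : a != b -> edge_mon K [set a; b] = 'X_a * 'X_b.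
Proof.
move=> ab; rewrite /edge_mon big_setU1 ?in_set1 //= big_set1; reflexivity.
Qed.

Lemma walk_prod (p : nat -> 'I_n) k :
  'X_(p 0%N) * (\prod_(0 <= l < k) ('X_(p (2 * l + 1)%N) * 'X_(p (2 * l + 2)%N)))
    * 'X_(p (2 * k + 1)%N)
  = \prod_(0 <= l < k.+1) ('X_(p (2 * l)%N) * 'X_(p (2 * l + 1)%N)) :> {mpoly K[n]}.
Proof.
elim: k => [|k IH].
  by rewrite big_nil big_nat1 mulr1 muln0.
rewrite big_nat_recr //= [in RHS]big_nat_recr //= -IH.
have -> : (2 * k.+1 = 2 * k + 2)%N by rewrite mulnS addnC.
have -> : (2 * k + 2 + 1 = 2 * k + 3)%N by rewrite -addnA.
ring.
Qed.

End Main.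

Theorem theorem6p5 (K : fieldType) (n : nat) (adj : rel 'I_n) (s : nat)
  (e : 'I_s -> {set 'I_n}) (u v : 'I_n) :
  simple_graph adj ->
  (1 <= s)%N ->
  (forall i, is_edge adj (e i)) ->
  even_connected adj e u v ->
  ideal_colon (ideal_pow (@edge_ideal K n adj) s.+1)
              (\prod_(i < s) @edge_mon K n (e i))
              ('X_u * 'X_v).
Proof.
move=> [_ irr] _ He [k [p [k1 [pu pv] H3 H4 H5]]].
rewrite /ideal_colon.
set W := [seq [set p (2 * l + 1)%N; p (2 * l + 2)%N] | l <- iota 0 k].
set S := [seq e i | i <- enum 'I_s].
have [R HR] : exists R, perm_eq S (W ++ R).
  apply: submset => x.
  case xW: (x \in W); last by rewrite (count_memPn (negbT xW)).
  move: xW => /mapP [l]; rewrite mem_iota add0n => /andP [_ lk] ->.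
  have [i ->] := H3 l lk.
  by have := H4 i; rewrite /W /S !count_map.
have sizeR : s = (k + size R)%N.
  by rewrite -(size_enum_ord s) -(size_map e) -/S (perm_size HR) size_cat size_map size_iota.
have Hneq : forall l, (l < k)%N -> p (2 * l + 1)%N != p (2 * l + 2)%N.
  move=> l lk; apply/eqP => E.
  have e2 : (2 * l + 2 = (2 * l + 1).+1)%N by rewrite addnS.
  have := H5 (2 * l + 1)%N; rewrite -e2 -E irr => h; suff: false by []; apply: h; lia.
have -> : \prod_(i < s) edge_mon K (e i) = \prod_(E <- S) edge_mon K E.
  by rewrite big_map big_enum.
rewrite (perm_big _ HR) big_cat big_map.
have -> : \prod_(l <- iota 0 k) edge_mon K [set p (2 * l + 1)%N; p (2 * l + 2)%N]
   = \prod_(0 <= l < k) ('X_(p (2 * l + 1)%N) * 'X_(p (2 * l + 2)%N)) :> {mpoly K[n]}.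
  rewrite /index_iota subn0 big_seq [RHS]big_seq; apply: eq_bigr => l.
  by rewrite mem_iota add0n => /andP [_ lk]; rewrite edge_mon2 // Hneq.
set L := [seq 'X_(p (2 * l)%N) * 'X_(p (2 * l + 1)%N) | l <- iota 0 k.+1] ++
         [seq edge_mon K E | E <- R] : seq {mpoly K[n]}.
have -> : 'X_u * 'X_v * (\prod_(0 <= l < k) ('X_(p (2 * l + 1)%N) * 'X_(p (2 * l + 2)%N)) *
       \prod_(E <- R) edge_mon K E) = \prod_(f <- L) f.
  rewrite /L big_cat !big_map -pu -pv.
  have WP := @walk_prod K n p k; rewrite /index_iota !subn0 in WP.
  rewrite -WP /= /index_iota subn0; rewrite !mulrA (mulrAC _ 'X_(p (2 * k + 1)%N)); reflexivity.
have -> : s.+1 = size L by rewrite /L size_cat !size_map size_iota sizeR.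
apply: pow_prod => f; rewrite mem_cat => /orP [] /mapP.
  move=> [l]; rewrite mem_iota add0n => /andP [_ lk] ->.
  have e1 : (2 * l + 1 = (2 * l).+1)%N by rewrite addn1.
  by rewrite e1; apply: edge_in; apply: H5; lia.
move=> [E ER ->].
have : E \in S by rewrite (perm_mem HR) mem_cat ER orbT.
move=> /mapP [i _ ->]; have [a [b [ab ->]]] := He i.
rewrite edge_mon2; first by apply: edge_in.
by apply/eqP => E'; move: ab; rewrite E' irr.
Qed.
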